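(* Let $\mathcal{I}$ be an ideal on $\omega$ such that $\mathrm{fin}\subseteq\mathcal{I}$. If there is a Borel $\mathcal{I}$-MED family $\mathcal{E}\subseteq\omega^\omega$, then there is a closed $\mathcal{I}$-MED family (closed in $\omega^\omega$ with the product topology).
   Context: $\mathrm{fin}$ is the ideal of finite subsets of $\omega$. Functions $f,g\in\omega^\omega$ are $\mathcal{I}$-eventually different ($\mathcal{I}$-ED) if $\{n:f(n)=g(n)\}\in\mathcal{I}$; $\mathcal{E}\subseteq\omega^\omega$ is an $\mathcal{I}$-MED family if any two distinct members are $\mathcal{I}$-ED and for every $h\in\omega^\omega$ there is $f\in\mathcal{E}$ such that $f,h$ are not $\mathcal{I}$-ED. *)

(* Defs.v *)
Definition natset := nat -> Prop.
Definition baire := nat -> nat.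
Definition bset := baire -> Prop.

Definition finite_set (A : natset) : Prop := exists N, forall k, A k -> k < N.

Definition is_ideal (I : natset -> Prop) : Prop :=
  I (fun _ => False) /\
  (forall A B : natset, I B -> (forall n, A n -> B n) -> I A) /\
  (forall A B : natset, I A -> I B -> I (fun n => A n \/ B n)) /\
  ~ I (fun _ => True).

Definition contains_fin (I : natset -> Prop) : Prop :=
  forall A, finite_set A -> I A.

Definition I_ED (I : natset -> Prop) (f g : baire) : Prop :=
  I (fun n => f n = g n).

Definition I_MED (I : natset -> Prop) (E : bset) : Prop :=
  (forall f g, E f -> E g -> f <> g -> I_ED I f g) /\
  (forall h : baire, exists f, E f /\ ~ I_ED I f h).

Definition baire_open (A : bset) : Prop :=
  forall f, A f -> exists n, forall g, (forall k, k < n -> g k = f k) -> A g.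

Definition baire_closed (A : bset) : Prop := baire_open (fun f => ~ A f).

Inductive borel : bset -> Prop :=
| borel_open A : baire_open A -> borel A
| borel_compl A : borel A -> borel (fun f => ~ A f)
| borel_cunion (F : nat -> bset) : (forall n, borel (F n)) -> borel (fun f => exists n, F n f)
| borel_ext A B : borel A -> (forall f, A f <-> B f) -> borel B.

(* Main.v *)
Require Import Defs.
From Stdlib Require Import Arith Lia Classical ClassicalEpsilon FunctionalExtensionality Cantor.

Definition agree (f g : baire) (n : nat) := forall k, k < n -> f k = g k.

Definition closed2 (F : baire -> baire -> Prop) :=
  forall f x, ~ F f x -> exists n, forall g y, agree g f n -> agree y x n -> ~ F g y.

Definition UP (B : bset) := exists F, closed2 F /\
  forall f, (B f <-> exists x, F f x) /\ (forall x y, F f x -> F f y -> x = y).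

Definition good (B : bset) := UP B /\ UP (fun f => ~ B f).

Lemma UP_ext A B : UP A -> (forall f, A f <-> B f) -> UP B.
Proof.
  intros [F [HF H]] E. exists F; split; auto.
  intro f; destruct (H f) as [H1 H2]; split; auto.
  rewrite <- E; auto.
Qed.

Lemma least (P : nat -> Prop) n : P n -> exists m, P m /\ forall k, k < m -> ~ P k.
Proof.
  revert P. induction n as [n IH] using lt_wf_ind. intros P Hn.
  destruct (classic (exists k, k < n /\ P k)) as [[k [Hk Pk]]|Hno].
  - exact (IH k Hk P Pk).
  - exists n; split; auto. intros k Hk Pk; apply Hno; eauto.
Qed.

Lemma choice_nat {A : Type} (P : nat -> A -> Prop) :
  (forall n, exists a, P n a) -> exists g : nat -> A, forall n, P n (g n).
Proof.
  intro H. exists (fun n => proj1_sig (constructive_indefinite_description _ (H n))).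
  intro n. exact (proj2_sig (constructive_indefinite_description _ (H n))).
Qed.

Lemma agree_mono f g n m : agree f g n -> m <= n -> agree f g m.
Proof. intros H Hm k Hk; apply H; lia. Qed.

Fixpoint bnd (p : nat -> nat) (N : nat) : nat :=
  match N with 0 => 0 | S N' => max (bnd p N') (S (p N')) end.

Lemma bnd_spec p N m : m < N -> p m < bnd p N.
Proof. induction N; simpl; intros; [lia|]. destruct (Nat.eq_dec m N); subst; [lia|].
  specialize (IHN ltac:(lia)); lia. Qed.

Lemma agree_comp p (x y : baire) N M : agree y x M -> bnd p N <= M ->
  agree (fun m => y (p m)) (fun m => x (p m)) N.
Proof. intros H HM k Hk. apply H. pose proof (bnd_spec p N k Hk). lia. Qed.

Definition cyl (U : bset) f n := forall g, agree g f n -> U g.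
Definition Min (U : bset) f n := cyl U f n /\ forall m, m < n -> ~ cyl U f m.

Lemma cyl_agree U f g n m : agree g f n -> m <= n -> (cyl U f m <-> cyl U g m).
Proof.
  intros H Hm; split; intros C h Hh; apply C; intros k Hk.
  - rewrite Hh by lia. apply H; lia.
  - rewrite Hh by lia. symmetry; apply H; lia.
Qed.

Lemma UP_open U : baire_open U -> UP U.
Proof.
  intro HU. exists (fun f x => (forall k, x (S k) = 0) /\ Min U f (x 0)). split.
  - intros f x H. destruct (classic (forall k, x (S k) = 0)) as [H0|H0].
    + exists (S (x 0)). intros g y Hg Hy [Hy0 [HM1 HM2]]. apply H; split; auto.
      rewrite <- (Hy 0) by lia.
      assert (Hg' : agree g f (y 0)) by (apply (agree_mono _ _ (S (x 0))); [auto| rewrite (Hy 0) by lia; lia]).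
      split.
      * apply (cyl_agree U f g (y 0) (y 0) Hg' (le_n _)); auto.
      * intros m Hm C. apply (HM2 m Hm). apply (cyl_agree U f g (y 0) m Hg'); [lia|auto].
    + apply not_all_ex_not in H0 as [k Hk]. exists (S (S k)). intros g y _ Hy [H1 _].
      apply Hk. rewrite <- (Hy (S k)) by lia. auto.
  - intro f. split; [split|].
    + intro Hf. destruct (HU f Hf) as [n Hn].
      destruct (least (fun n => cyl U f n) n) as [m [Hm1 Hm2]]; [exact Hn|].
      exists (fun k => match k with 0 => m | S _ => 0 end). split; [reflexivity|]. split; auto.
    + intros [x [_ [C _]]]. apply C. intros k _; reflexivity.
    + intros x y [Hx1 [Hx2 Hx3]] [Hy1 [Hy2 Hy3]].
      assert (E0 : x 0 = y 0).
      { destruct (lt_eq_lt_dec (x 0) (y 0)) as [[L|L]|L]; auto.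
        - exfalso; exact (Hy3 _ L Hx2).
        - exfalso; exact (Hx3 _ L Hy2). }
      apply functional_extensionality; intros [|k]; auto. rewrite Hx1, Hy1; auto.
Qed.

Lemma UP_open_compl U : baire_open U -> UP (fun f => ~ U f).
Proof.
  intro HU. exists (fun f x => ~ U f /\ forall k, x k = 0). split.
  - intros f x H. destruct (classic (U f)) as [Hf|Hf].
    + destruct (HU f Hf) as [n Hn]. exists n. intros g y Hg _ [Hn' _]. apply Hn', Hn, Hg.
    + destruct (classic (forall k, x k = 0)) as [H0|H0]; [exfalso; auto|].
      apply not_all_ex_not in H0 as [k Hk]. exists (S k). intros g y _ Hy [_ H1].
      apply Hk. rewrite <- (Hy k) by lia. auto.
  - intro f. split; [split|].
    + intro Hf. exists (fun _ => 0). auto.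
    + intros [x [H _]]; auto.
    + intros x y [_ Hx] [_ Hy]. apply functional_extensionality; intro k. rewrite Hx, Hy; auto.
Qed.

Definition subI (n : nat) (x : baire) : baire := fun m => x (to_nat (n, m)).
Definition sub (n : nat) (x : baire) : baire := fun m => x (S (to_nat (n, m))).

Lemma UP_inter (B : nat -> bset) (FF : nat -> baire -> baire -> Prop) :
  (forall n, closed2 (FF n)) ->
  (forall n f, (~ B n f <-> exists x, FF n f x) /\ (forall x y, FF n f x -> FF n f y -> x = y)) ->
  UP (fun f => ~ exists n, B n f).
Proof.
  intros Hc Hs. exists (fun f x => forall n, FF n f (subI n x)). split.
  - intros f x H. apply not_all_ex_not in H as [n Hn].
    destruct (Hc n f _ Hn) as [N HN].
    exists (N + bnd (fun m => to_nat (n, m)) N). intros g y Hg Hy HF.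
    apply (HN g (subI n y)); [apply (agree_mono _ _ _ _ Hg); lia| |apply HF].
    apply (agree_comp (fun m => to_nat (n, m)) x y N _ Hy). lia.
  - intro f. split; [split|].
    + intro Hf. assert (H : forall n, exists w, FF n f w).
      { intro n. apply (proj1 (Hs n f)). intro Hb; apply Hf; eauto. }
      destruct (choice_nat _ H) as [W HW].
      exists (fun k => let (n, m) := of_nat k in W n m). intro n.
      replace (subI n _) with (W n); auto.
      apply functional_extensionality; intro m. unfold subI. rewrite cancel_of_to. reflexivity.
    + intros [x Hx] [n Hn]. apply (proj2 (proj1 (Hs n f))) in Hn; eauto.
    + intros x y Hx Hy. assert (E : forall n, subI n x = subI n y).
      { intro n. exact (proj2 (Hs n f) _ _ (Hx n) (Hy n)). }
      apply functional_extensionality; intro k. rewrite <- (cancel_to_of k).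
      destruct (of_nat k) as [n m]. exact (equal_f (E n) m).
Qed.

Lemma UP_union (B : nat -> bset) (FF FF' : nat -> baire -> baire -> Prop) :
  (forall n, closed2 (FF n)) -> (forall n, closed2 (FF' n)) ->
  (forall n f, (B n f <-> exists x, FF n f x) /\ (forall x y, FF n f x -> FF n f y -> x = y)) ->
  (forall n f, (~ B n f <-> exists x, FF' n f x) /\ (forall x y, FF' n f x -> FF' n f y -> x = y)) ->
  UP (fun f => exists n, B n f).
Proof.
  intros Hc Hc' Hs Hs'.
  exists (fun f x => FF (x 0) f (sub (x 0) x) /\ (forall i, i < x 0 -> FF' i f (sub i x))
                   /\ (forall i m, x 0 < i -> sub i x m = 0)). split.
  - intros f x H.
    destruct (classic (FF (x 0) f (sub (x 0) x))) as [H1|H1].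
    + destruct (classic (forall i, i < x 0 -> FF' i f (sub i x))) as [H2|H2].
      * assert (H3 : ~ forall i m, x 0 < i -> sub i x m = 0) by tauto.
        apply not_all_ex_not in H3 as [i H3]. apply not_all_ex_not in H3 as [m H3].
        apply imply_to_and in H3 as [Hi Hm].
        exists (S (S (to_nat (i, m)))). intros g y _ Hy [_ [_ H4]].
        assert (E0 : y 0 = x 0) by (apply Hy; lia).
        apply Hm. unfold sub. rewrite <- (Hy (S (to_nat (i, m)))) by lia.
        apply (H4 i m). lia.
      * apply not_all_ex_not in H2 as [i H2]. apply imply_to_and in H2 as [Hi H2].
        destruct (Hc' i f _ H2) as [N HN].
        exists (S (N + bnd (fun m => S (to_nat (i, m))) N)). intros g y Hg Hy [_ [H4 _]].
        assert (E0 : y 0 = x 0) by (apply Hy; lia).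
        apply (HN g (sub i y)); [apply (agree_mono _ _ _ _ Hg); lia| |apply H4; lia].
        apply (agree_comp (fun m => S (to_nat (i, m))) x y N _ Hy). lia.
    + destruct (Hc (x 0) f _ H1) as [N HN].
      exists (S (N + bnd (fun m => S (to_nat (x 0, m))) N)). intros g y Hg Hy [H4 _].
      assert (E0 : y 0 = x 0) by (apply Hy; lia).
      rewrite E0 in H4.
      apply (HN g (sub (x 0) y)); [apply (agree_mono _ _ _ _ Hg); lia| |exact H4].
      apply (agree_comp (fun m => S (to_nat (x 0, m))) x y N _ Hy). lia.
  - intro f. split; [split|].
    + intros [n Hn]. destruct (least (fun n => B n f) n Hn) as [n0 [Hn0 Hl]].
      assert (H : forall i, exists w, (i < n0 -> FF' i f w) /\ (i = n0 -> FF i f w)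
                                   /\ (n0 < i -> forall m, w m = 0)).
      { intro i. destruct (lt_eq_lt_dec i n0) as [[L|L]|L].
        - destruct (proj1 (proj1 (Hs' i f)) (Hl i L)) as [w Hw].
          exists w; repeat split; intros; auto; lia.
        - subst. destruct (proj1 (proj1 (Hs n0 f)) Hn0) as [w Hw].
          exists w; repeat split; intros; auto; lia.
        - exists (fun _ => 0); repeat split; intros; auto; lia. }
      destruct (choice_nat _ H) as [W HW].
      exists (fun k => match k with 0 => n0 | S k' => let (i, m) := of_nat k' in W i m end).
      assert (ES : forall i, sub i (fun k => match k with 0 => n0 | S k' => let (i, m) := of_nat k' in W i m end) = W i).
      { intro i. apply functional_extensionality; intro m. unfold sub. rewrite cancel_of_to. reflexivity. }
      cbv beta iota. rewrite !ES. repeat split.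
      * apply (HW n0). reflexivity.
      * intros i Hi. rewrite ES. apply (HW i). auto.
      * intros i m Hi. rewrite ES. apply (HW i). auto.
    + intros [x [H1 _]]. exists (x 0). apply (proj2 (proj1 (Hs (x 0) f))). eauto.
    + intros x y [Hx1 [Hx2 Hx3]] [Hy1 [Hy2 Hy3]].
      assert (E0 : x 0 = y 0).
      { destruct (lt_eq_lt_dec (x 0) (y 0)) as [[L|L]|L]; auto; exfalso.
        - exact (proj2 (proj1 (Hs' (x 0) f)) (ex_intro _ _ (Hy2 _ L))
                   (proj2 (proj1 (Hs (x 0) f)) (ex_intro _ _ Hx1))).
        - exact (proj2 (proj1 (Hs' (y 0) f)) (ex_intro _ _ (Hx2 _ L))
                   (proj2 (proj1 (Hs (y 0) f)) (ex_intro _ _ Hy1))). }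
      assert (E : forall i, sub i x = sub i y).
      { intro i. destruct (lt_eq_lt_dec i (x 0)) as [[L|L]|L].
        - apply (proj2 (Hs' i f)); [auto|]. apply Hy2; lia.
        - subst i. apply (proj2 (Hs (x 0) f)); auto. rewrite E0; auto.
        - apply functional_extensionality; intro m. rewrite Hx3, Hy3; auto; lia. }
      apply functional_extensionality; intros [|k]; auto. rewrite <- (cancel_to_of k).
      destruct (of_nat k) as [n m]. exact (equal_f (E n) m).
Qed.

Lemma borel_good B : borel B -> good B.
Proof.
  induction 1 as [A HA|A HA [H1 H2]|F HF IH|A B HA [H1 H2] E].
  - split; [apply UP_open|apply UP_open_compl]; auto.
  - split; auto. apply (UP_ext A); auto. intro f; split; intro H; [tauto|apply NNPP; auto].
  - assert (G1 : forall n, exists FF, closed2 FF /\ forall f, (F n f <-> exists x, FF f x) /\ (forall x y, FF f x -> FF f y -> x = y))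
      by (intro n; exact (proj1 (IH n))).
    assert (G2 : forall n, exists FF, closed2 FF /\ forall f, (~ F n f <-> exists x, FF f x) /\ (forall x y, FF f x -> FF f y -> x = y))
      by (intro n; exact (proj2 (IH n))).
    destruct (choice_nat _ G1) as [FF HFF]. destruct (choice_nat _ G2) as [FF' HFF'].
    split.
    + apply (UP_union F FF FF'); intro n; [apply HFF|apply HFF'|apply HFF|apply HFF'].
    + apply (UP_inter F FF'); intro n; apply HFF'.
  - split; [apply (UP_ext A)|apply (UP_ext (fun f => ~ A f))]; auto.
    intro f; rewrite E; tauto.
Qed.

Section Coding.
Variable F : baire -> baire -> Prop.
Variable a : nat -> nat.
Variable sigma : nat -> nat.
Hypothesis Ha : forall k, a k < a (S k).

Lemma a_mono k j : k < j -> a k < a j.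
Proof. induction 1; [apply Ha|]. specialize (Ha m); lia. Qed.

Lemma a_inj k j : a k = a j -> k = j.
Proof. intro H. destruct (lt_eq_lt_dec k j) as [[L|L]|L]; auto;
  pose proof (a_mono _ _ L); lia. Qed.

Definition R n := exists k, a k = n.

Definition struct (g f x : baire) :=
  (forall k, g (a k) = to_nat (f k, x k)) /\ (forall n, ~ R n -> g n = f (sigma n)).

Definition Gset (g : baire) := exists f x, F f x /\ struct g f x.

Lemma G_closed : closed2 F -> baire_closed Gset.
Proof.
  intros Hc g Hg.
  set (f0 := fun k => fst (of_nat (g (a k)))).
  set (x0 := fun k => snd (of_nat (g (a k)))).
  destruct (classic (F f0 x0)) as [HF|HF].
  - destruct (classic (forall n, ~ R n -> g n = f0 (sigma n))) as [HR|HR].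
    + exfalso; apply Hg; exists f0, x0; split; auto; split; auto.
      intro k. unfold f0, x0. rewrite <- surjective_pairing, cancel_to_of. reflexivity.
    + apply not_all_ex_not in HR as [n0 Hn0]. apply imply_to_and in Hn0 as [HnR Hne].
      exists (S (max n0 (a (sigma n0)))). intros g' Hag [f' [x' [HF' [Ha' HnR']]]].
      apply Hne. rewrite <- (Hag n0) by lia. rewrite (HnR' n0 HnR).
      unfold f0. rewrite <- (Hag (a (sigma n0))) by lia. rewrite Ha', cancel_of_to. reflexivity.
  - destruct (Hc f0 x0 HF) as [M HM]. exists (a M).
    intros g' Hag [f' [x' [HF' [Ha' _]]]]. apply (HM f' x'); auto; intros k Hk;
      pose proof (a_mono _ _ Hk);
      unfold f0, x0; rewrite <- (Hag (a k)) by lia; rewrite Ha', cancel_of_to; reflexivity.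
Qed.

Lemma G_exists f x : exists g, struct g f x.
Proof.
  exists (fun n => match excluded_middle_informative (R n) with
           | left H => let k := proj1_sig (constructive_indefinite_description _ H) in to_nat (f k, x k)
           | right _ => f (sigma n) end).
  split.
  - intro k. destruct (excluded_middle_informative (R (a k))) as [H|H].
    + destruct (constructive_indefinite_description _ H) as [k' Hk']. simpl.
      apply a_inj in Hk'. subst; reflexivity.
    + exfalso; apply H; exists k; auto.
  - intros n Hn. destruct (excluded_middle_informative (R n)) as [H|H]; [contradiction|reflexivity].
Qed.

Lemma G_agree g g' f x f' x' n : struct g f x -> struct g' f' x' -> g n = g' n ->
  (R n /\ exists k, a k = n /\ f k = f' k) \/ (~ R n /\ f (sigma n) = f' (sigma n)).
Proof.
  intros [H1 H2] [H1' H2'] E. destruct (classic (R n)) as [[k Hk]|Hn].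
  - left. split; [exists k; auto|]. exists k; split; auto. subst.
    rewrite H1, H1' in E. apply (f_equal of_nat) in E. rewrite !cancel_of_to in E.
    congruence.
  - right. split; auto. rewrite <- H2, <- H2'; auto.
Qed.

Lemma G_eq g g' f x : struct g f x -> struct g' f x -> g = g'.
Proof.
  intros [H1 H2] [H1' H2']. apply functional_extensionality; intro n.
  destruct (classic (R n)) as [[k Hk]|Hn].
  - subst. rewrite H1, H1'; auto.
  - rewrite H2, H2'; auto.
Qed.

End Coding.

Theorem theorem6p2 (I : natset -> Prop) :
  is_ideal I -> contains_fin I ->
  (exists E : bset, borel E /\ I_MED I E) ->
  exists E : bset, baire_closed E /\ I_MED I E.
Proof.
  intros [I0 [Isub [Iun Iprop]]] Hfin [E [HB [Hpw Hmax]]].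
  destruct (borel_good E HB) as [[F [HFc HFs]] _].
  assert (Pw : forall a sigma g g' f x f' x', struct a sigma g f x -> struct a sigma g' f' x' ->
            F f x -> F f' x' -> g <> g' -> f <> f' /\ E f /\ E f').
  { intros a sigma g g' f x f' x' Hs Hs' HF HF' Hne. split; [|split].
    - intro Ef. subst f'. apply Hne. pose proof (proj2 (HFs f) x x' HF HF'). subst x'.
      eapply G_eq; eauto.
    - apply (HFs f); eauto.
    - apply (HFs f'); eauto. }
  destruct (classic (exists A, I A /\ ~ finite_set A)) as [[A [HA HAinf]]|Hno].
  - assert (Hc : forall N, exists k, A k /\ N <= k).
    { intro N. apply NNPP; intro H. apply HAinf. exists N. intros k Hk.
      destruct (lt_dec k N); auto. exfalso; apply H; exists k; split; auto; lia. }
    destruct (choice_nat _ Hc) as [c Hcc].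
    set (a := fix a k := match k with 0 => c 0 | S k => c (S (a k)) end).
    assert (Ha : forall k, a k < a (S k)).
    { intro k. simpl. pose proof (proj2 (Hcc (S (a k)))). lia. }
    assert (HaA : forall n, R a n -> A n).
    { intros n [k Hk]; subst. destruct k; simpl; apply Hcc. }
    exists (Gset F a (fun n => n)). split; [apply G_closed; auto|split].
    + intros g g' [f [x [HF Hs]]] [f' [x' [HF' Hs']]] Hne.
      destruct (Pw _ _ _ _ _ _ _ _ Hs Hs' HF HF' Hne) as [Hff [Ef Ef']].
      pose proof (Hpw f f' Ef Ef' Hff) as HP. unfold I_ED in *.
      apply (Isub _ _ (Iun _ _ HA HP)). intros n Hn.
      destruct (G_agree a (fun n => n) g g' f x f' x' n Hs Hs' Hn) as [[HR _]|[_ H]]; auto.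
    + intro h. destruct (Hmax h) as [f [Ef Hf]].
      destruct (proj1 (proj1 (HFs f)) Ef) as [x Hx].
      destruct (G_exists a (fun n => n) Ha f x) as [g Hg].
      exists g. split; [exists f, x; auto|]. intro HD. apply Hf.
      unfold I_ED in *. apply (Isub _ _ (Iun _ _ HD HA)). intros n Hn.
      destruct (classic (R a n)) as [HR|HR]; [right; auto|left].
      rewrite (proj2 Hg n HR). auto.
  - assert (Hf : forall A, I A -> finite_set A).
    { intros A HA. apply NNPP; intro H. apply Hno; eauto. }
    set (a := fun k => S (2 * k)).
    assert (Ha : forall k, a k < a (S k)) by (intro; unfold a; lia).
    exists (Gset F a (fun n => n / 2)). split; [apply G_closed; auto|split].
    + intros g g' [f [x [HF Hs]]] [f' [x' [HF' Hs']]] Hne.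
      destruct (Pw _ _ _ _ _ _ _ _ Hs Hs' HF HF' Hne) as [Hff [Ef Ef']].
      destruct (Hf _ (Hpw f f' Ef Ef' Hff)) as [N HN].
      unfold I_ED. apply (Isub _ (fun n => n < 2 * N + 2)).
      { apply Hfin. exists (2 * N + 2); auto. }
      intros n Hn.
      destruct (G_agree a (fun n => n / 2) g g' f x f' x' n Hs Hs' Hn) as [[_ [k [Hk H]]]|[_ H]].
      * apply HN in H. unfold a in Hk. lia.
      * apply HN in H. pose proof (Nat.div_mod n 2 ltac:(lia)).
        pose proof (Nat.mod_upper_bound n 2 ltac:(lia)). lia.
    + intro h. destruct (Hmax (fun k => h (2 * k))) as [f [Ef Hfh]].
      destruct (proj1 (proj1 (HFs f)) Ef) as [x Hx].
      destruct (G_exists a (fun n => n / 2) Ha f x) as [g Hg].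
      exists g. split; [exists f, x; auto|]. intro HD. apply Hfh.
      destruct (Hf _ HD) as [M HM]. apply Hfin. exists M. intros k Hk.
      assert (Hg2 : g (2 * k) = f k).
      { rewrite (proj2 Hg (2 * k)).
        - f_equal. rewrite Nat.mul_comm. apply Nat.div_mul. lia.
        - intros [j Hj]. unfold a in Hj. lia. }
      assert (M > 2 * k) by (apply HM; rewrite Hg2; auto). lia.
Qed.
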